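(* Consider a well-posed network $\Sigma$ and nonempty closed sets $\mathcal{A}_i\subset\mathbb{R}^{n_i}$, $i\in\mathbb{N}$, and let $\mathcal{A}:=\{x\in X: x_i\in\mathcal{A}_i\ \forall i\}$. Suppose $\Sigma$ is eISS with respect to $\mathcal{A}$. Then there exist $M\in\mathbb{N}$ and continuous functions $W_i:\mathbb{R}^{n_i}\to[0,\infty)$, $i\in\mathbb{N}$, together with $\underline\omega_i,\overline\omega_i\in\mathcal{K}_\infty$, $\gamma_{ij}\in\mathcal{K}_\infty\cup\{0\}$, $\gamma_{iu}\in\mathcal{K}$ ($i,j\in\mathbb{N}$) such that: (1) $\underline\omega_i(|\xi_i|_{\mathcal{A}_i})\le W_i(\xi_i)\le\overline\omega_i(|\xi_i|_{\mathcal{A}_i})$ for all $i$ and $\xi_i\in\mathbb{R}^{n_i}$; (2) $W_i(x_i(M,\xi,u))\le\max\{\sup_{j\in\mathbb{N}}\gamma_{ij}(W_j(\xi_j)),\gamma_{iu}(\|u\|_\infty)\}$ for all $i$, $\xi\in X$, $u\in\mathcal{U}$; (3) there exist $\underline\omega,\overline\omega\in\mathcal{K}_\infty$ with $\underline\omega\le\underline\omega_i\le\overline\omega_i\le\overline\omega$ for all $i$, $\alpha\in\mathcal{K}_\infty$ with $\alpha(s)<s$ for $s>0$ and $\gamma_{ij}\le\alpha$ for all $i,j$, and $\bar\gamma_u\in\mathcal{K}$ with $\gamma_{iu}\le\bar\gamma_u$ for all $i$.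
   Context: For each $i\in\mathbb{N}$ fix positive integers $n_i,p_i$, norms on $\mathbb{R}^{n_i},\mathbb{R}^{p_i}$, a finite set $I_i\subset\mathbb{N}\setminus\{i\}$ with every $\{j: i\in I_j\}$ finite, and continuous $f_i:\mathbb{R}^{n_i}\times\prod_{j\in I_i}\mathbb{R}^{n_j}\times\mathbb{R}^{p_i}\to\mathbb{R}^{n_i}$. $X$ (resp. $U$) the spaces of sequences $(x_i)$, $x_i\in\mathbb{R}^{n_i}$ (resp. $(u_i)$, $u_i\in\mathbb{R}^{p_i}$) with finite norm $|x|_\infty=\sup_i|x_i|$. $f(x,u)_i=f_i(x_i,(x_j)_{j\in I_i},u_i)$; network $\Sigma$: $x(k+1)=f(x(k),u(k))$; well-posed means $f(X\times U)\subset X$. $\mathcal{U}$: sequences $u:\mathbb{N}_0\to U$ with $\|u\|_\infty=\sup_k|u(k)|_\infty<\infty$; $x(k,\xi,u)$ the solution with $x(0)=\xi$, $x_i(k,\xi,u)$ its $i$-th component. $|z|_{\mathcal{A}_i}=\inf_{y\in\mathcal{A}_i}|z-y|$, $|x|_{\mathcal{A}}=\inf_{y\in\mathcal{A}}|x-y|_\infty$. $\Sigma$ is eISS w.r.t. $\mathcal{A}$ ($\mathcal{A}$ nonempty) if there exist $C\ge1$, $\rho\in[0,1)$, $\gamma\in\mathcal{K}$ with $|x(k,\xi,u)|_{\mathcal{A}}\le\max\{C\rho^k|\xi|_{\mathcal{A}},\gamma(\|u\|_\infty)\}$ for all $\xi\in X$, $u\in\mathcal{U}$, $k\in\mathbb{N}_0$.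 $\mathcal{K},\mathcal{K}_\infty$ standard comparison classes. *)

(* Defs.v *)
From HB Require Import structures.
From mathcomp Require Import all_boot all_order all_algebra.
From mathcomp Require Import all_classical all_reals ereal.

Set Implicit Arguments.
Unset Strict Implicit.
Unset Printing Implicit Defensive.

Import Order.TTheory GRing.Theory Num.Theory.
Local Open Scope ring_scope.
Local Open Scope classical_set_scope.

Section Defs.
Variable R : realType.

Definition is_norm (k : nat) (N : 'rV[R]_k -> R) : Prop :=
  (forall x, 0 <= N x) /\
  (forall x, N x = 0 -> x = 0) /\
  (forall (a : R) x, N (a *: x) = `|a| * N x) /\
  (forall x y, N (x + y) <= N x + N y).

Definition ncontinuous (k m : nat) (Nk : 'rV[R]_k -> R) (Nm : 'rV[R]_m -> R)
  (g : 'rV[R]_k -> 'rV[R]_m) : Prop :=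
  forall x (e : R), 0 < e -> exists d : R, 0 < d /\
    forall y, Nk (y - x) < d -> Nm (g y - g x) < e.

Definition ncontinuous_real (k : nat) (Nk : 'rV[R]_k -> R) (g : 'rV[R]_k -> R) : Prop :=
  forall x (e : R), 0 < e -> exists d : R, 0 < d /\
    forall y, Nk (y - x) < d -> `|g y - g x| < e.

Definition nclosed (k : nat) (Nk : 'rV[R]_k -> R) (A : set 'rV[R]_k) : Prop :=
  forall z, (forall e : R, 0 < e -> exists2 y, A y & Nk (z - y) < e) -> A z.

Definition dist_set (k : nat) (Nk : 'rV[R]_k -> R) (A : set 'rV[R]_k) (z : 'rV[R]_k) : R :=
  inf [set Nk (z - y) | y in A].

Definition cont_nonneg (g : R -> R) : Prop :=
  forall s, 0 <= s -> forall e : R, 0 < e -> exists d : R, 0 < d /\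
    forall t, 0 <= t -> `|t - s| < d -> `|g t - g s| < e.

Definition is_K (g : R -> R) : Prop :=
  cont_nonneg g /\ g 0 = 0 /\ (forall s t, 0 <= s -> s < t -> g s < g t).

Definition is_Kinf (g : R -> R) : Prop :=
  is_K g /\ (forall b : R, exists s, 0 <= s /\ b < g s).

Definition is_Kinf0 (g : R -> R) : Prop :=
  is_Kinf g \/ (forall s, 0 <= s -> g s = 0).

Definition fle (g h : R -> R) : Prop := forall s, 0 <= s -> g s <= h s.

Definition state (n : nat -> nat) := forall i : nat, 'rV[R]_(n i).

Definition supnorm (n : nat -> nat) (N : forall i, 'rV[R]_(n i) -> R) (x : state n) : R :=
  sup [set N i (x i) | i in [set: nat]].

(* membership in X (finite sup-norm) *)
Definition bounded_seq (n : nat -> nat) (N : forall i, 'rV[R]_(n i) -> R) (x : state n) : Prop :=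
  exists B : R, forall i, N i (x i) <= B.

(* A component function f_i : R^{n_i} x prod_{j in I_i} R^{n_j} x R^{p_i} -> R^{n_i}
   is encoded as  fi : R^{n_i} -> state n -> R^{p_i} -> R^{n_i}  which only depends on
   the coordinates j in I_i of its second argument, and is (jointly) continuous. *)
Definition local_dep (n : nat -> nat) (Ii : seq nat) (m q : nat)
  (fi : 'rV[R]_m -> state n -> 'rV[R]_q -> 'rV[R]_m) : Prop :=
  forall a x y v, (forall j, j \in Ii -> x j = y j) -> fi a x v = fi a y v.

Definition joint_continuous (n : nat -> nat) (N : forall i, 'rV[R]_(n i) -> R)
  (Ii : seq nat) (m q : nat) (Nm : 'rV[R]_m -> R) (Nq : 'rV[R]_q -> R)
  (fi : 'rV[R]_m -> state n -> 'rV[R]_q -> 'rV[R]_m) : Prop :=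
  forall a x v (e : R), 0 < e -> exists d : R, 0 < d /\
    forall b y w, Nm (b - a) < d -> (forall j, j \in Ii -> N j (y j - x j) < d) ->
      Nq (w - v) < d -> Nm (fi b y w - fi a x v) < e.

Definition netf (n p : nat -> nat)
  (f : forall i, 'rV[R]_(n i) -> state n -> 'rV[R]_(p i) -> 'rV[R]_(n i))
  (x : state n) (v : state p) : state n :=
  fun i => f i (x i) x (v i).

Fixpoint traj (n p : nat -> nat)
  (f : forall i, 'rV[R]_(n i) -> state n -> 'rV[R]_(p i) -> 'rV[R]_(n i))
  (xi : state n) (u : nat -> state p) (k : nat) : state n :=
  match k with
  | 0 => xi
  | k'.+1 => netf f (traj f xi u k') (u k')
  end.

Definition in_calU (p : nat -> nat) (Np : forall i, 'rV[R]_(p i) -> R)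
  (u : nat -> state p) : Prop :=
  (forall k, bounded_seq Np (u k)) /\
  exists B : R, forall k, supnorm Np (u k) <= B.

Definition inputnorm (p : nat -> nat) (Np : forall i, 'rV[R]_(p i) -> R)
  (u : nat -> state p) : R :=
  sup [set supnorm Np (u k) | k in [set: nat]].

Definition well_posed (n p : nat -> nat) (N : forall i, 'rV[R]_(n i) -> R)
  (Np : forall i, 'rV[R]_(p i) -> R)
  (f : forall i, 'rV[R]_(n i) -> state n -> 'rV[R]_(p i) -> 'rV[R]_(n i)) : Prop :=
  forall x v, bounded_seq N x -> bounded_seq Np v -> bounded_seq N (netf f x v).

Definition setA (n : nat -> nat) (N : forall i, 'rV[R]_(n i) -> R)
  (A : forall i, set 'rV[R]_(n i)) : set (state n) :=
  [set x | bounded_seq N x /\ forall i, A i (x i)].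

Definition dist_A (n : nat -> nat) (N : forall i, 'rV[R]_(n i) -> R)
  (A : forall i, set 'rV[R]_(n i)) (x : state n) : R :=
  inf [set supnorm N (fun i => x i - y i) | y in setA N A].

Definition eISS (n p : nat -> nat) (N : forall i, 'rV[R]_(n i) -> R)
  (Np : forall i, 'rV[R]_(p i) -> R)
  (f : forall i, 'rV[R]_(n i) -> state n -> 'rV[R]_(p i) -> 'rV[R]_(n i))
  (A : forall i, set 'rV[R]_(n i)) : Prop :=
  setA N A !=set0 /\
  exists (C rho : R) (gam : R -> R),
    1 <= C /\ 0 <= rho /\ rho < 1 /\ is_K gam /\
    forall (xi : state n) (u : nat -> state p) (k : nat),
      bounded_seq N xi -> in_calU Np u ->
      dist_A N A (traj f xi u k) <=
        Num.max (C * rho ^+ k * dist_A N A xi) (gam (inputnorm Np u)).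

End Defs.

(* Main.v *)
Require Import Defs.
From HB Require Import structures.
From mathcomp Require Import all_boot all_order all_algebra.
From mathcomp Require Import all_classical all_reals ereal.
From mathcomp Require Import ring lra.
Import Order.TTheory GRing.Theory Num.Theory.
Local Open Scope ring_scope.
Local Open Scope classical_set_scope.

Set Implicit Arguments.
Unset Strict Implicit.
Section H.
Variable R : realType.

Lemma norm0 k (N : 'rV[R]_k -> R) : is_norm N -> N 0 = 0.
Proof.
move=> [_ [_ [hs _]]]. by rewrite -(scale0r (0 : 'rV[R]_k)) hs normr0 mul0r.
Qed.

Lemma normN k (N : 'rV[R]_k -> R) x : is_norm N -> N (- x) = N x.
Proof.
move=> [_ [_ [hs _]]]. by rewrite -scaleN1r hs normrN normr1 mul1r.
Qed.

Lemma normB k (N : 'rV[R]_k -> R) x y : is_norm N -> N (x - y) <= N x + N y.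
Proof.
move=> hN; have [_ [_ [_ ht]]] := hN. by rewrite -(normN y hN) ht.
Qed.

Lemma normBr k (N : 'rV[R]_k -> R) x y z : is_norm N -> N (x - z) <= N (x - y) + N (y - z).
Proof.
move=> [_ [_ [_ ht]]]. by apply: le_trans (ht _ _); rewrite addrA subrK.
Qed.

Lemma dist_ge0 k (N : 'rV[R]_k -> R) A z : is_norm N -> A !=set0 -> 0 <= dist_set N A z.
Proof.
move=> [h0 _] [a Aa]; apply: lb_le_inf; first by exists (N (z - a)), a.
by move=> _ [y _ <-].
Qed.

Lemma dist_le k (N : 'rV[R]_k -> R) A z a : is_norm N -> A a -> dist_set N A z <= N (z - a).
Proof.
move=> [h0 _] Aa; apply: ge_inf; last by exists a.
by exists 0 => _ [y _ <-].
Qed.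

Lemma dist_lip k (N : 'rV[R]_k -> R) A z w : is_norm N -> A !=set0 ->
  dist_set N A w <= N (w - z) + dist_set N A z.
Proof.
move=> hN hA; rewrite -lerBlDl; apply: lb_le_inf.
  by case: hA => a Aa; exists (N (z - a)), a.
move=> _ [y Ay <-]; rewrite lerBlDl.
exact: le_trans (dist_le _ hN Ay) (normBr _ _ _ hN).
Qed.

Lemma dist_cont k (N : 'rV[R]_k -> R) A : is_norm N -> A !=set0 ->
  ncontinuous_real N (dist_set N A).
Proof.
move=> hN hA x e e0; exists e; split => // y hy.
have h1 := @dist_lip k N A x y hN hA.
have h2 := @dist_lip k N A y x hN hA.
rewrite -(normN (x - y) hN) opprB in h2.
rewrite ltr_norml; apply/andP; split; lra.
Qed.


Lemma supnorm_ge (n : nat -> nat) (N : forall i, 'rV[R]_(n i) -> R) x i :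
  bounded_seq N x -> N i (x i) <= supnorm N x.
Proof.
move=> [B hB]; apply: ub_le_sup; last by exists i.
by exists B => _ [j _ <-].
Qed.

Lemma supnorm_le (n : nat -> nat) (N : forall i, 'rV[R]_(n i) -> R) x B :
  (forall i, N i (x i) <= B) -> supnorm N x <= B.
Proof.
move=> hB; apply: ge_sup; first by exists (N 0%N (x 0%N)), 0%N.
by move=> _ [j _ <-].
Qed.

Lemma bounded_sub (n : nat -> nat) (N : forall i, 'rV[R]_(n i) -> R) x y :
  (forall i, is_norm (N i)) -> bounded_seq N x -> bounded_seq N y ->
  bounded_seq N (fun i => x i - y i).
Proof.
move=> hN [B hB] [C hC]; exists (B + C) => i.
exact: le_trans (normB _ _ (hN i)) (lerD (hB i) (hC i)).
Qed.

Lemma traj_bounded (n p : nat -> nat) (N : forall i, 'rV[R]_(n i) -> R)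
  (Np : forall i, 'rV[R]_(p i) -> R) f xi u k :
  well_posed N Np f -> bounded_seq N xi -> in_calU Np u ->
  bounded_seq N (traj f xi u k).
Proof.
move=> hwp hxi [hu _]; elim: k => [|k IH] //=.
exact: hwp.
Qed.

Lemma idK : is_Kinf (fun s : R => s).
Proof.
split; [split; [|split]|] => //.
- move=> s _ e e0; exists e; split => // t _ h; by [].
- move=> b; exists (Num.max b 0 + 1); split; first by rewrite addr_ge0 // le_max lexx orbT.
  have : b <= Num.max b 0 by rewrite le_max lexx.
  lra.
Qed.

Lemma halfK : is_Kinf (fun s : R => s / 2).
Proof.
split; [split; [|split]|].
- move=> s _ e e0; exists e; split => // t _ h.
  move: h; rewrite !ltr_norml => /andP[h1 h2]; apply/andP; split; lra.
- by rewrite mul0r.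
- move=> s t _ st; lra.
- move=> b; exists (2 * (Num.max b 0) + 1); split.
    by rewrite addr_ge0 // mulr_ge0 // le_max lexx orbT.
  have : b <= Num.max b 0 by rewrite le_max lexx.
  lra.
Qed.

Lemma geomM (C rho : R) : 1 <= C -> 0 <= rho -> rho < 1 ->
  exists M : nat, (0 < M)%N /\ C * rho ^+ M <= 1 / 2.
Proof.
move=> C1 r0 r1.
have key : forall m : nat, rho ^+ m * (1 + m%:R * (1 - rho)) <= 1.
  elim => [|m IH]; first by rewrite expr0 mul0r addr0 mul1r.
  have q0 : 0 <= rho ^+ m by rewrite exprn_ge0.
  have q1 : rho ^+ m <= 1 by rewrite exprn_ile1 // ltW.
  rewrite exprS -natr1.
  set q := rho ^+ m in IH q0 q1 *.
  set M := m%:R in IH *.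
  have M0 : 0 <= M by rewrite /M ler0n.
  have h1 : rho * (q * (1 + M * (1 - rho))) <= rho * 1 by rewrite ler_wpM2l.
  have h2 : (rho * (1 - rho)) * q <= (rho * (1 - rho)) * 1.
    by rewrite ler_wpM2l // mulr_ge0 //; lra.
  have h3 : rho * (1 - rho) <= 1 - rho by nra.
  have -> : rho * q * (1 + (M + 1) * (1 - rho)) =
     rho * (q * (1 + M * (1 - rho))) + (rho * (1 - rho)) * q by ring.
  lra.
set t := 1 - rho.
have t0 : 0 < t by rewrite /t; lra.
have : 0 <= 2 * C / t by rewrite divr_ge0 //; lra.
move=> /archi_boundP hb2.
exists (Num.bound (2 * C / t)).+1; split => //.
have := key (Num.bound (2 * C / t)).+1.
set K := (Num.bound (2 * C / t)).+1%:R.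
have hK : 2 * C / t <= K by rewrite /K -natr1; lra.
have hK2 : 2 * C <= K * t by rewrite -ler_pdivrMr.
have q0 : 0 <= rho ^+ (Num.bound (2 * C / t)).+1 by rewrite exprn_ge0.
rewrite -/t; move: q0; set q := rho ^+ _ => q0 h.
nra.
Qed.


End H.

Theorem theorem3 (R : realType)
  (n p : nat -> nat)
  (N : forall i, 'rV[R]_(n i) -> R) (Np : forall i, 'rV[R]_(p i) -> R)
  (I : nat -> seq nat)
  (f : forall i, 'rV[R]_(n i) -> state R n -> 'rV[R]_(p i) -> 'rV[R]_(n i))
  (A : forall i, set 'rV[R]_(n i))
  (hn : forall i, (0 < n i)%N) (hp : forall i, (0 < p i)%N)
  (hN : forall i, is_norm (N i)) (hNp : forall i, is_norm (Np i))
  (hIi : forall i, i \notin I i)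
  (hIfin : forall i, exists K : nat, forall j, i \in I j -> (j < K)%N)
  (hloc : forall i, local_dep (I i) (f i))
  (hcont : forall i, joint_continuous N (I i) (N i) (Np i) (f i))
  (hwp : well_posed N Np f)
  (hA0 : forall i, A i !=set0)
  (hAcl : forall i, nclosed (N i) (A i))
  (hiss : eISS N Np f A) :
  exists (M : nat) (W : forall i, 'rV[R]_(n i) -> R)
         (oml omu : nat -> R -> R) (gam : nat -> nat -> R -> R) (gamu : nat -> R -> R),
    (0 < M)%N /\
    (forall i, ncontinuous_real (N i) (W i) /\ forall z, 0 <= W i z) /\
    (forall i, is_Kinf (oml i) /\ is_Kinf (omu i) /\ is_K (gamu i)) /\
    (forall i j, is_Kinf0 (gam i j)) /\
    (* (1) sandwich bounds *)
    (forall i (z : 'rV[R]_(n i)),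
        oml i (dist_set (N i) (A i) z) <= W i z /\
        W i z <= omu i (dist_set (N i) (A i) z)) /\
    (* (2) small-gain type decay after M steps *)
    (forall i (xi : state R n) (u : nat -> state R p),
        bounded_seq N xi -> in_calU Np u ->
        ((W i (traj f xi u M i))%:E <=
          maxe (ereal_sup [set (gam i j (W j (xi j)))%:E | j in [set: nat]])
               (gamu i (inputnorm Np u))%:E)%E) /\
    (* (3) uniform bounds *)
    (exists (ol ou alpha gbar : R -> R),
        is_Kinf ol /\ is_Kinf ou /\ is_Kinf alpha /\ is_K gbar /\
        (forall i, fle ol (oml i) /\ fle (oml i) (omu i) /\ fle (omu i) ou) /\
        (forall s, 0 < s -> alpha s < s) /\
        (forall i j, fle (gam i j) alpha) /\
        (forall i, fle (gamu i) gbar)).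
Proof.
have [[y0 hy0] [C [rho [gm [C1 [r0 [r1 [gK hI]]]]]]]] := hiss.
have [M [M0 hM]] := geomM C1 r0 r1.
exists M, (fun i => dist_set (N i) (A i)), (fun _ s => s), (fun _ s => s),
  (fun _ _ s => s / 2), (fun _ => gm).
split => //.
split => [i|]; first by split; [exact: dist_cont | move=> z; exact: dist_ge0].
split => [i|]; first by split; [exact: idK | split; [exact: idK | exact: gK]].
split => [i j|]; first by left; exact: halfK.
split => [i z|]; first by split; exact: lexx.
split; last first.
  exists (fun s => s), (fun s => s), (fun s => s / 2), gm.
  split; first exact: idK.
  split; first exact: idK.
  split; first exact: halfK.
  split; first exact: gK.
  split; first by move=> i; split; [|split] => s _; exact: lexx.
  split; first by move=> s s0; lra.
  split; by [move=> i j s _; exact: lexx | move=> i s _; exact: lexx].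
move=> i xi u hxi hu.
have hxb : bounded_seq N (traj f xi u M) := traj_bounded M hwp hxi hu.
have dA_ge0 : forall z, bounded_seq N z -> 0 <= dist_A N A z.
  move=> z hz; apply: lb_le_inf; first by exists (supnorm N (fun i => z i - y0 i)), y0.
  move=> _ [y [hyb _] <-].
  apply: le_trans (supnorm_ge 0%N (bounded_sub hN hz hyb)).
  exact: (hN 0%N).1.
have step1 : dist_set (N i) (A i) (traj f xi u M i) <= dist_A N A (traj f xi u M).
  apply: lb_le_inf.
    by exists (supnorm N (fun i => traj f xi u M i - y0 i)), y0.
  move=> _ [y [hyb hyA] <-].
  apply: le_trans (dist_le _ (hN i) (hyA i)) _.
  exact: (supnorm_ge i (bounded_sub hN hxb hyb)).
have step2 := hI xi u M hxi hu.
have step3 : C * rho ^+ M * dist_A N A xi <= dist_A N A xi / 2.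
  have := dA_ge0 xi hxi => d0.
  have := ler_wpM2r d0 hM; lra.
have step4 : ((dist_A N A xi / 2)%:E <=
   ereal_sup [set ((dist_set (N j) (A j) (xi j)) / 2)%:E | j in [set: nat]])%E.
  set S := ereal_sup _.
  have hS : forall j, (((dist_set (N j) (A j) (xi j)) / 2)%:E <= S)%E.
    by move=> j; apply: ereal_sup_ubound; exists j.
  case E: S => [s| |]; last first.
  - by have := hS 0%N; rewrite E leeNy_eq.
  - by rewrite leey.
  rewrite lee_fin; apply/ler_addgt0Pr => e e0.
  have hj : forall j, dist_set (N j) (A j) (xi j) / 2 <= s.
    by move=> j; have := hS j; rewrite E lee_fin.
  have pick : forall j, exists y, A j y /\ N j (xi j - y) < dist_set (N j) (A j) (xi j) + e.
    move=> j.
    have hinf : has_inf [set N j (xi j - y) | y in A j].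
      split.
        by case: (hA0 j) => a Aa; exists (N j (xi j - a)), a.
      by exists 0 => _ [y _ <-]; exact: (hN j).1.
    have [_ [y Ay <-] lt] := @inf_adherent R [set N j (xi j - y) | y in A j] e e0 hinf.
    by exists y.
  pose y := fun j => proj1_sig (cid (pick j)).
  have hy : forall j, A j (y j) /\ N j (xi j - y j) < dist_set (N j) (A j) (xi j) + e.
    by move=> j; exact: (proj2_sig (cid (pick j))).
  have [B hB] := hxi.
  have yb : bounded_seq N y.
    exists (B + (2 * s + e)) => j.
    have -> : y j = xi j - (xi j - y j) by rewrite opprB addrC subrK.
    apply: le_trans (normB _ _ (hN j)) _.
    apply: lerD => //.
    have := (hy j).2; have := hj j; lra.
  have h1 : dist_A N A xi <= supnorm N (fun j => xi j - y j).
    apply: ge_inf; last by exists y => //; split => // j; exact: (hy j).1.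
    exists 0 => _ [z [hzb _] <-].
    apply: le_trans (supnorm_ge 0%N (bounded_sub hN hxi hzb)).
    exact: (hN 0%N).1.
  have h2 : supnorm N (fun j => xi j - y j) <= 2 * s + e.
    apply: supnorm_le => j.
    have := (hy j).2; have := hj j; lra.
  lra.
move: step2; rewrite le_max => /orP[h|h].
  rewrite le_max; apply/orP; left.
  apply: le_trans step4; rewrite lee_fin; lra.
rewrite le_max; apply/orP; right.
by rewrite lee_fin; apply: le_trans h.
Qed.
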